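(* Let $(X,\tau)$ be an extended locally convex space and let $Y$ be a linear subspace of $X$. Then for every linear functional $f$ on $Y$ continuous with respect to $\tau|_Y$, there exists a $\tau$-continuous linear functional $\hat f$ on $X$ with $\hat f|_Y=f$.
   Context: An extended seminorm on a vector space $X$ over $\mathbb{R}$ or $\mathbb{C}$ is a map $\rho:X\to[0,\infty]$ with $\rho(\alpha x)=|\alpha|\rho(x)$ and $\rho(x+y)\le\rho(x)+\rho(y)$. An extended locally convex space $(X,\tau)$ is a vector space with the topology induced by a family $\{\rho_i\}$ of extended seminorms (neighborhood base at $x_0$: $\{x:\max_{i\in J}\rho_i(x-x_0)<\varepsilon\}$, $J$ finite, $\varepsilon>0$). *)

(* Defs.v *)
From HB Require Import structures.
From mathcomp Require Import all_boot all_order all_algebra.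
From mathcomp Require Import classical_sets boolp cardinality reals constructive_ereal ereal.
From mathcomp Require Import complex.

Set Implicit Arguments.
Unset Strict Implicit.
Unset Printing Implicit Defensive.

Import Order.TTheory GRing.Theory Num.Theory.
Local Open Scope ring_scope.
Local Open Scope classical_set_scope.

(* Scalars K (R or C), with a real absolute value absK : K -> R.
   X is a K-vector space.  *)
Section ELCS.
Variables (R : realType) (K : fieldType) (absK : K -> R) (X : lmodType K).

Definition ext_seminorm (rho : X -> \bar R) : Prop :=
  [/\ forall x, (0 <= rho x)%E,
      forall (a : K) (x : X), rho (a *: x) = ((absK a)%:E * rho x)%E
    & forall x y, (rho (x + y)%R <= rho x + rho y)%E].

Definition basic_nbhd (I : Type) (rho : I -> X -> \bar R) (J : set I) (e : R)
    (x0 : X) : set X :=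
  [set x | forall i, J i -> (rho i (x - x0)%R < e%:E)%E].

Definition lin_subspace (Y : set X) : Prop :=
  Y 0 /\ forall (a : K) x y, Y x -> Y y -> Y (a *: x + y).

(* f is a linear functional on Y (its values outside Y are irrelevant) *)
Definition linear_on (Y : set X) (f : X -> K) : Prop :=
  forall (a : K) x y, Y x -> Y y -> f (a *: x + y) = a * f x + f y.

(* f restricted to Y is continuous for tau|_Y, where tau is the topology
   generated by the family rho (neighbourhood base at y0 in Y:
   Y ∩ basic_nbhd J e y0), and K carries the topology of absK. *)
Definition cont_on (I : Type) (rho : I -> X -> \bar R) (Y : set X)
    (f : X -> K) : Prop :=
  forall y0, Y y0 -> forall eps : R, 0 < eps ->
    exists J : set I, exists e : R,
      [/\ finite_set J, 0 < e &
        forall y, Y y -> basic_nbhd rho J e y0 y -> absK (f y - f y0) < eps].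

End ELCS.

(* Main.v *)
Require Import Defs.
From HB Require Import structures.
From mathcomp Require Import all_boot all_order all_algebra.
From mathcomp Require Import classical_sets boolp cardinality reals constructive_ereal ereal.
From mathcomp Require Import complex.
From mathcomp Require Import ring lra.
Import Order.TTheory GRing.Theory Num.Theory.
Local Open Scope ring_scope.
Local Open Scope classical_set_scope.


Section Ehelp.
Variable R : realType.
Implicit Types (a c : R) (Q : \bar R).

Lemma E1 a c Q : (0 <= Q)%E -> (c%:E <= Q - a%:E)%E -> ((a + c)%:E <= Q)%E.
Proof. case: Q => [r| |] //=; last by move=> *; rewrite leey. rewrite -EFinD !lee_fin => _; lra. Qed.

Lemma E2 a c Q : (0 <= Q)%E -> (a%:E - Q <= c%:E)%E -> ((a - c)%:E <= Q)%E.
Proof. case: Q => [r| |] //=; last by move=> *; rewrite leey. rewrite -EFinD !lee_fin => _; lra. Qed.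

Lemma E3 a1 a2 Q1 Q2 : (0 <= Q1)%E -> (0 <= Q2)%E ->
  ((a1 + a2)%:E <= Q1 + Q2)%E -> (a1%:E - Q1 <= Q2 - a2%:E)%E.
Proof.
case: Q1 => [r1| |] //; case: Q2 => [r2| |] //=; rewrite ?leey ?leNye //.
by rewrite -!EFinD !lee_fin => _ _; lra.
Qed.

Lemma E4 (t b : R) Q : 0 < t -> (b%:E <= Q)%E -> ((t * b)%:E <= t%:E * Q)%E.
Proof.
move=> t0; case: Q => [r| |].
- by rewrite -EFinM !lee_fin => h; rewrite ler_pM2l.
- by move=> _; rewrite gt0_muley ?lte_fin // leey.
- by rewrite leeNy_eq.
Qed.
End Ehelp.
Arguments E1 {R a c Q}.
Arguments E2 {R a c Q}.
Arguments E3 {R a1 a2 Q1 Q2}.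
Arguments E4 {R t b Q}.


Section HBsec.
Variables (R : realType) (V : lmodType R) (q : V -> \bar R).
Hypothesis q_ge0 : forall x, (0 <= q x)%E.
Hypothesis qZ : forall (r : R) x, q (r *: x) = (`|r|%:E * q x)%E.
Hypothesis qD : forall x y, (q (x + y) <= q x + q y)%E.

Definition P0 (G : set (V * R)) := [/\ forall x a b, G (x,a) -> G (x,b) -> a = b,
  forall c x y a b, G (x,a) -> G (y,b) -> G (c *: x + y, c * a + b) &
  forall x a, G (x,a) -> (a%:E <= q x)%E].

Definition ext1 (H : set (V * R)) x c : set (V * R) :=
  [set p | exists d a t, H (d,a) /\ p = (d + t *: x, a + t * c)].

Lemma ext1_sub H x c : H `<=` ext1 H x c.
Proof. by case=> d a Hda; exists d, a, 0; rewrite scale0r addr0 mul0r addr0. Qed.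

Lemma ext1_in H x c : ext1 H x c (x, c) \/ ~ H (0,0).
Proof.
have [H0|] := pselect (H (0,0)); last by right.
by left; exists 0, 0, 1; rewrite scale1r add0r mul1r add0r.
Qed.

Lemma qZpos s z : 0 < s -> q (s *: z) = (s%:E * q z)%E.
Proof. by move=> s0; rewrite qZ gtr0_norm. Qed.

Section P0facts.
Variable H : set (V * R).
Hypothesis PH : P0 H.
Hypothesis H0 : H (0,0).

Lemma P0_scale r {d a} : H (d,a) -> H (r *: d, r * a).
Proof. by case: PH => _ cl _ Hd; have := cl r _ _ _ _ Hd H0; rewrite !addr0. Qed.

Lemma P0_sub {d1 a1 d2 a2} : H (d1,a1) -> H (d2,a2) -> H (d2 - d1, a2 - a1).
Proof.
case: PH => _ cl _ H1 H2; have := cl (-1) _ _ _ _ H1 H2.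
by rewrite scaleN1r mulN1r [_ + d2]addrC [_ + a2]addrC.
Qed.

Lemma P0_add {d1 a1 d2 a2} : H (d1,a1) -> H (d2,a2) -> H (d1 + d2, a1 + a2).
Proof. by case: PH => _ cl _ H1 H2; have := cl 1 _ _ _ _ H1 H2; rewrite scale1r mul1r. Qed.

Lemma ext1_P0 x c : ~ (exists a, H (x,a)) ->
  (forall d a t, H (d,a) -> ((a + t * c)%:E <= q (d + t *: x))%E) ->
  P0 (ext1 H x c).
Proof.
move=> nx dom; case: PH => fn cl dm; split.
- move=> y b1 b2 [d1 [a1 [t1 [H1 [-> ->]]]]] [d2 [a2 [t2 [H2 []]]]] E ->.
  have [tt|tn] := eqVneq t1 t2.
    subst t2; move/addIr: E => E; subst d2.
    by rewrite (fn _ _ _ H1 H2).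
  exfalso; apply: nx; exists ((t1 - t2)^-1 * (a2 - a1)).
  have -> : x = (t1 - t2)^-1 *: (d2 - d1).
    have : (t1 - t2) *: x = d2 - d1.
      by rewrite scalerBl -[t1 *: x](addKr d1) E addrA addrK addrC.
    move=> <-; rewrite scalerA mulVf ?scale1r //; by rewrite subr_eq0.
  exact/P0_scale/P0_sub.
- move=> cc y z b1 b2 [d1 [a1 [t1 [H1 [-> ->]]]]] [d2 [a2 [t2 [H2 [-> ->]]]]].
  exists (cc *: d1 + d2), (cc * a1 + a2), (cc * t1 + t2); split; first exact: cl.
  congr (_, _); last by ring.
  by rewrite scalerDr scalerA addrACA scalerDl.
- by move=> y b [d [a [t [Hd [-> ->]]]]]; exact: dom.
Qed.

Lemma exists_c x : ~ (exists a, H (x,a)) ->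
  exists c, forall d a t, H (d,a) -> ((a + t * c)%:E <= q (d + t *: x))%E.
Proof.
move=> nx; case: PH => fn cl dm.
have [[d0 [a0 [r0 [H0a q0]]]]|none] :=
  pselect (exists d a r, H (d,a) /\ q (d + x) = r%:E); last first.
  exists 0 => d a t Hd; rewrite mulr0 addr0.
  have [->|tn] := eqVneq t 0; first by rewrite scale0r addr0; exact: dm.
  have -> : d + t *: x = t *: (t^-1 *: d + x).
    by rewrite scalerDr scalerA mulfV ?scale1r.
  rewrite qZ; have Hd' := P0_scale (t^-1) Hd.
  have : (0 <= q (t^-1 *: d + x))%E by [].
  case E: (q (t^-1 *: d + x)) => [r| |] // _.
    by exfalso; apply: none; exists (t^-1 *: d), (t^-1 * a), r.
  by rewrite gt0_muley ?leey // lte_fin normr_gt0.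
pose S := [set z | exists d a, H (d,a) /\ z = (a%:E - q (d - x))%E].
have hb d a : H (d,a) -> (ereal_sup S <= q (d + x) - a%:E)%E.
  move=> Hd; apply/ereal_supP => _ [d1 [a1 [H1 ->]]].
  apply: E3 => //; apply: le_trans (dm _ _ (P0_add H1 Hd)) _.
  apply: le_trans (qD _ _).
  by rewrite addrACA addNr addr0.
have lb : ((-a0 - r0)%:E <= ereal_sup S)%E.
  apply: ereal_sup_ubound; exists (- d0), (- a0); split.
    by have := P0_scale (-1) H0a; rewrite scaleN1r mulN1r.
  by rewrite -(opprD d0 x) -scaleN1r qZ q0 normrN normr1 mul1e.
case E: (ereal_sup S) hb lb => [c| |] hb lb; last 2 first.
- by have := hb _ _ H0a; rewrite q0.
- by [].
exists c => d a t Hd.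
have [t0|tn|->] := ltgtP t 0; last first.
- by rewrite mul0r addr0 scale0r addr0; exact: dm.
-
  have Hd' := P0_scale (t^-1) Hd.
  have := E1 (q_ge0 _) (hb _ _ Hd').
  move/(E4 tn); rewrite -qZpos // scalerDr scalerA mulfV ?gt_eqF // scale1r.
  by rewrite mulrDr mulrA mulfV ?gt_eqF // mul1r.
-
  have sp : 0 < - t by rewrite oppr_gt0.
  have Hd' := P0_scale ((- t)^-1) Hd.
  have : ((((- t)^-1 * a)%:E - q ((- t)^-1 *: d - x)) <= c%:E)%E.
    by rewrite -E; apply: ereal_sup_ubound; exists ((- t)^-1 *: d), ((- t)^-1 * a).
  move/(E2 (q_ge0 _))/(E4 sp); rewrite -qZpos // scalerBr scalerA mulfV ?gt_eqF // scale1r.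
  by rewrite scaleNr opprK mulrBr mulrA mulfV ?gt_eqF // mul1r mulNr opprK.
Qed.

End P0facts.

Variables (Y : set V) (u : V -> R).
Hypothesis Ysub : lin_subspace Y.
Hypothesis ulin : linear_on Y u.
Hypothesis udom : forall y, Y y -> ((u y)%:E <= q y)%E.

Definition gY : set (V * R) := [set p | Y p.1 /\ p.2 = u p.1].

Lemma P0gY : P0 gY.
Proof.
case: Ysub => Y0 Ycl; split.
- by move=> x a b [_ /= ->] [_ /= ->].
- move=> c x y a b [/= Yx ->] [/= Yy ->]; split => /=; [exact: Ycl | by rewrite ulin].
- by move=> x a [/= Yx ->]; exact: udom.
Qed.

Lemma gY0 : gY (0,0).
Proof.
case: Ysub => Y0 _; split => //=.
have := ulin 1 0 0 Y0 Y0; rewrite scale1r addr0 mul1r => E.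
by apply: (addrI (u 0)); rewrite addr0 -E.
Qed.

Lemma chainP0 (F : set (set (V * R))) : F `<=` (fun G => P0 (G `|` gY)) ->
  total_on F subset -> P0 (\bigcup_(G in F) G `|` gY).
Proof.
move=> FP Ftot.
set U := \bigcup_(G in F) G `|` gY.
have common p1 p2 : U p1 -> U p2 ->
    exists2 G, P0 G & [/\ G `<=` U, G p1 & G p2].
  have sub G : F G -> G `|` gY `<=` U.
    by move=> FG p [Gp|gp]; [left; exists G | right].
  case=> [[G1 FG1 G1p]|g1]; case=> [[G2 FG2 G2p]|g2].
  - have [s12|s21] := Ftot _ _ FG1 FG2.
      exists (G2 `|` gY); first exact: FP.
      by split; [exact: sub | left; exact: s12 | left].
    exists (G1 `|` gY); first exact: FP.
    by split; [exact: sub | left | left; exact: s21].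
  - exists (G1 `|` gY); first exact: FP.
    by split; [exact: sub | left | right].
  - exists (G2 `|` gY); first exact: FP.
    by split; [exact: sub | right | left].
  - exists gY; first exact: P0gY.
    by split => //; move=> p gp; right.
split.
- move=> x a b U1 U2; have [G [fn _ _] [_ G1 G2]] := common _ _ U1 U2.
  exact: fn G1 G2.
- move=> c x y a b U1 U2; have [G [_ cl _] [GU G1 G2]] := common _ _ U1 U2.
  exact/GU/cl.
- move=> x a U1; have [G [_ _ dm] [_ G1 _]] := common _ _ U1 U1.
  exact: dm.
Qed.

Lemma HB_ext : exists g : V -> R, [/\ linear_on setT g,
  forall y, Y y -> g y = u y & forall x, ((g x)%:E <= q x)%E].
Proof.
have [A [PA Amax]] := Zorn_bigcup chainP0.
set H := A `|` gY.
have H0 : H (0,0) by right; exact: gY0.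
have full x : exists a, H (x,a).
  apply: contrapT => nx.
  have [c hc] := exists_c _ PA H0 _ nx.
  have P1 := ext1_P0 _ PA H0 _ _ nx hc.
  have HE : H `<=` ext1 H x c by exact: ext1_sub.
  apply: (Amax (ext1 H x c)).
  - split; first by move=> p Ap; apply: HE; left.
    move=> sub; apply: nx; exists c; left; apply: sub.
    by exists 0, 0, 1; rewrite scale1r add0r mul1r add0r.
  - rewrite setUidl; first exact: P1.
    by move=> p gp; apply: HE; right.
have [g hg] := choice full.
exists g; case: PA => fn cl dm; split.
- by move=> c x y _ _; apply: fn (hg _) (cl c _ _ _ _ (hg x) (hg y)).
- by move=> y Yy; apply: fn (hg y) _; right.
- by move=> x; exact: dm (hg x).
Qed.

End HBsec.


Section Gen.
Variables (R : realType) (K : fieldType) (absK : K -> R) (X : lmodType K)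
  (I : Type) (rho : I -> X -> \bar R).
Hypothesis rho_sn : forall i, ext_seminorm absK (rho i).
Variables (n : nat) (h : 'I_n -> I).

Definition Ssum x := (\sum_(k < n) rho (h k) x)%E.

Lemma rho_ge0 i x : (0 <= rho i x)%E.
Proof. by case: (rho_sn i). Qed.

Lemma Ssum_ge0 x : (0 <= Ssum x)%E.
Proof. by apply: sume_ge0 => k _; exact: rho_ge0. Qed.

Lemma Ssum_Z a x : Ssum (a *: x) = ((absK a)%:E * Ssum x)%E.
Proof.
rewrite /Ssum ge0_sume_distrr; last by move=> k _; exact: rho_ge0.
by apply: eq_bigr => k _; case: (rho_sn (h k)).
Qed.

Lemma Ssum_D x y : (Ssum (x + y) <= Ssum x + Ssum y)%E.
Proof.
rewrite /Ssum -big_split /=; apply: lee_sum => k _; by case: (rho_sn (h k)).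
Qed.

Lemma Ssum_term (k : 'I_n) x : (rho (h k) x <= Ssum x)%E.
Proof.
rewrite /Ssum (bigD1 k) //=; apply: leeDl; apply: sume_ge0 => *; exact: rho_ge0.
Qed.

Lemma Ssum_lt x (e : R) : (forall k : 'I_n, (rho (h k) x < e%:E)%E) ->
  (Ssum x <= (n%:R * e)%:E)%E.
Proof.
move=> hl; apply: (@le_trans _ _ (\sum_(k < n) e%:E)%E).
  by apply: lee_sum => k _; exact/ltW.
by rewrite sumEFin sumr_const card_ord mulr_natl.
Qed.

Lemma qS_ge0 (e : R) x : 0 < e -> (0 <= (e^-1)%:E * Ssum x)%E.
Proof. by move=> e0; apply: mule_ge0; [rewrite lee_fin invr_ge0 ltW | exact: Ssum_ge0]. Qed.

Lemma qS_Z (e : R) a x :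
  ((e^-1)%:E * Ssum (a *: x) = (absK a)%:E * ((e^-1)%:E * Ssum x))%E.
Proof. by rewrite Ssum_Z muleCA. Qed.

Lemma qS_D (e : R) x y : 0 < e ->
  ((e^-1)%:E * Ssum (x + y) <= (e^-1)%:E * Ssum x + (e^-1)%:E * Ssum y)%E.
Proof.
move=> e0; rewrite -ge0_muleDr ?Ssum_ge0 //; apply: lee_wpmul2l.
  by rewrite lee_fin invr_ge0 ltW.
exact: Ssum_D.
Qed.

Variable emb : R -> K.
Hypothesis absK_embM : forall s z, 0 <= s -> absK (emb s * z) = s * absK z.
Hypothesis absK_emb : forall s, 0 <= s -> absK (emb s) = s.

Lemma dom_gen (Y : set X) (f : X -> K) (e : R) :
  lin_subspace Y -> linear_on Y f -> 0 < e ->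
  (forall y, Y y -> (forall k : 'I_n, (rho (h k) y < e%:E)%E) -> absK (f y) < 1) ->
  forall y, Y y -> ((absK (f y))%:E <= (e^-1)%:E * Ssum y)%E.
Proof.
move=> [Y0 Ycl] flin e0 cont y Yy.
have f0 : f 0 = 0.
  have := flin 1 0 0 Y0 Y0; rewrite scale1r addr0 mul1r => E.
  by apply: (addrI (f 0)); rewrite addr0 -E.
have := Ssum_ge0 y.
case E: (Ssum y) => [c| |] // _; last first.
  by rewrite gt0_muley ?leey // lte_fin invr_gt0.
rewrite -EFinM lee_fin; set A := absK (f y).
rewrite leNgt; apply/negP => lt.
have c0 : 0 <= c by have := Ssum_ge0 y; rewrite E lee_fin.
have A0 : 0 < A by apply: le_lt_trans lt; rewrite mulr_ge0 // invr_ge0 ltW.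
pose s := A^-1.
have s0 : 0 <= s by rewrite invr_ge0 ltW.
have Ys : Y (emb s *: y) by have := Ycl (emb s) y 0 Yy Y0; rewrite addr0.
have := cont _ Ys.
have -> : f (emb s *: y) = emb s * f y.
  by have := flin (emb s) y 0 Yy Y0; rewrite !addr0 f0 addr0.
rewrite absK_embM // mulVf ?gt_eqF // ltxx => H.
suff : false by [].
apply: H => k.
apply: le_lt_trans (Ssum_term k _) _.
rewrite Ssum_Z E absK_emb // -EFinM lte_fin.
move: lt; rewrite /s mulrC ltr_pdivrMr // => lt.
by rewrite mulrC ltr_pdivrMr // mulrC.
Qed.

Lemma cont_gen (J : set I) (fh : X -> K) (e : R) :
  finite_set J -> (forall k : 'I_n, J (h k)) -> 0 < e ->
  linear_on setT fh ->
  (forall x, ((absK (fh x))%:E <= (e^-1)%:E * Ssum x)%E) ->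
  cont_on absK rho setT fh.
Proof.
move=> finJ Jh e0 lin dom x0 _ eps eps0.
exists J, (e * eps / (n.+1)%:R); split => //.
  by rewrite divr_gt0 ?mulr_gt0 // ltr0n.
move=> y _ hb.
have -> : fh y - fh x0 = fh (y - x0).
  have := lin 1 (y - x0) x0 Logic.I Logic.I; rewrite scale1r subrK mul1r => ->.
  by rewrite addrK.
have := dom (y - x0).
have : (Ssum (y - x0) <= (n%:R * (e * eps / (n.+1)%:R))%:E)%E.
  by apply: Ssum_lt => k; apply: hb; exact: Jh.
move=> Sle dm.
have := le_trans dm (lee_wpmul2l _ Sle).
rewrite lee_fin invr_ge0 ltW // -EFinM lee_fin => /(_ isT) le1.
apply: le_lt_trans le1 _.
have nz : (n.+1)%:R != 0 :> R by rewrite pnatr_eq0.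
have -> : e^-1 * (n%:R * (e * eps / (n.+1)%:R)) = eps * (n%:R / (n.+1)%:R).
  by field; rewrite addrC natr1 nz gt_eqF.
by rewrite -[ltRHS]mulr1 ltr_pM2l // ltr_pdivrMr ?ltr0n // mul1r ltr_nat.
Qed.

End Gen.


Section Cplx.
Variables (R : realType) (X : lmodType (complex R)).
Definition XR : Type := X.
HB.instance Definition _ := GRing.Zmodule.on XR.
Definition scR (r : R) (x : XR) : XR := ((r%:C)%C *: (x : X)).
Lemma scRA a b v : scR a (scR b v) = scR (a * b) v.
Proof. by rewrite /scR scalerA -rmorphM. Qed.
Lemma scR1 : left_id 1 scR.
Proof. by move=> v; rewrite /scR rmorph1 scale1r. Qed.
Lemma scRDr : right_distributive scR +%R.
Proof. by move=> a u v; rewrite /scR scalerDr. Qed.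
Lemma scRDl v : {morph scR^~ v: a b / a + b}.
Proof. by move=> a b; rewrite /scR rmorphD scalerDl. Qed.
HB.instance Definition _ := GRing.Zmodule_isLmodule.Build R XR scRA scR1 scRDr scRDl.

Lemma scRE (r : R) (x : XR) : r *: x = ((r%:C)%C *: (x : X)).
Proof. by []. Qed.


Lemma normcR (s : R) : 0 <= s -> Normc.normc (s%:C)%C = s.
Proof. move=> s0; by rewrite /Normc.normc /= expr0n /= addr0 sqrtr_sqr ger0_norm. Qed.
End Cplx.


Section C2.
Variable R : realType.
Lemma caddE (a1 a2 b1 b2 : R) : ((a1 +i* a2) + (b1 +i* b2))%C = ((a1 + b1) +i* (a2 + b2))%C.
Proof. by []. Qed.
Lemma cmulE (a1 a2 b1 b2 : R) : ((a1 +i* a2) * (b1 +i* b2))%C = ((a1 * b1 - a2 * b2) +i* (a1 * b2 + a2 * b1))%C.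
Proof. by []. Qed.
Lemma crealE (r : R) : (r%:C)%C = (r +i* 0)%C.
Proof. by []. Qed.
Lemma cdecomp (a1 a2 : R) : ((a1 +i* a2) = a1%:C + a2%:C * 'i)%C.
Proof. by rewrite !crealE cmulE caddE; congr Complex; ring. Qed.
Lemma ci_decomp (a1 a2 : R) : ('i * (a1 +i* a2) = (-a2)%:C + a1%:C * 'i)%C.
Proof. by rewrite !crealE !cmulE caddE; congr Complex; ring. Qed.
Lemma normcRa (r : R) : Normc.normc (r%:C)%C = `|r|.
Proof. by rewrite /Normc.normc /= expr0n /= addr0 sqrtr_sqr. Qed.
Lemma normc_conj (a b : R) : Normc.normc (a +i* (-b))%C = Normc.normc (a +i* b)%C.
Proof. by rewrite /Normc.normc sqrrN. Qed.
Lemma Re_le_normc (z : complex R) : complex.Re z <= Normc.normc z.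
Proof.
case: z => a b /=; apply: le_trans (ler_norm a) _; rewrite -sqrtr_sqr.
by apply: ler_wsqrtr; rewrite lerDl sqr_ge0.
Qed.
Lemma normc_sq (a b : R) : Normc.normc (a +i* b)%C ^+ 2 = a ^+ 2 + b ^+ 2.
Proof. by rewrite /Normc.normc sqr_sqrtr // addr_ge0 // sqr_ge0. Qed.
Lemma normc_ge0 (z : complex R) : 0 <= Normc.normc z.
Proof. by case: z => a b; rewrite /Normc.normc sqrtr_ge0. Qed.
Lemma E5 (N : R) (Q : \bar R) : 0 <= N -> (0 <= Q)%E ->
  ((N ^+ 2)%:E <= N%:E * Q)%E -> (N%:E <= Q)%E.
Proof.
move=> N0; case: Q => [r| |] //; last by move=> *; rewrite leey.
rewrite -EFinM !lee_fin => r0 h; nra.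
Qed.
End C2.


Lemma enumJ {I : Type} {J : set I} : finite_set J ->
  exists n (h : 'I_n -> I), (forall k, J (h k)) /\ (forall i, J i -> exists k, h k = i).
Proof.
case=> n /card_set_bijP [f [ff finj fsurj]].
have ex (k : 'I_n) : exists i, J i /\ f i = val k.
  have : `I_n (val k) by rewrite /= ltn_ord.
  by case/fsurj => i Ji fi; exists i.
have [h hh] := choice ex.
exists n, h; split; first by move=> k; case: (hh k).
move=> i Ji; have fi : (f i < n)%N by exact: ff.
exists (Ordinal fi); case: (hh (Ordinal fi)) => Jh fh.
by apply: finj; rewrite ?in_setE.
Qed.

Lemma lin0 {K : fieldType} {X : lmodType K} {Y : set X} {f : X -> K} :
  Y 0 -> linear_on Y f -> f 0 = 0.
Proof.
move=> Y0 flin; have := flin 1 0 0 Y0 Y0; rewrite scale1r addr0 mul1r => E.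
by apply: (addrI (f 0)); rewrite addr0 -E.
Qed.

Lemma real_case (R : realType) (X : lmodType R) (I : Type) (rho : I -> X -> \bar R) :
     (forall i, ext_seminorm (fun a : R => `|a|) (rho i)) ->
     forall (Y : set X), lin_subspace Y ->
     forall f : X -> R, linear_on Y f ->
       cont_on (fun a : R => `|a|) rho Y f ->
       exists fh : X -> R,
         [/\ linear_on setT fh, cont_on (fun a : R => `|a|) rho setT fh
           & forall y, Y y -> fh y = f y].
Proof.
move=> rsn Y Ysub f flin fcont.
have [Y0 Ycl] := Ysub.
have f0 := lin0 Y0 flin.
have [J [e [finJ e0 cJ]]] := fcont 0 Y0 1 ltr01.
have [n [h [hJ Jh]]] := enumJ finJ.
pose q x := ((e^-1)%:E * Ssum R R X I rho n h x)%E.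
have embM (s z : R) : 0 <= s -> `|id s * z| = s * `|z|.
  by move=> s0; rewrite normrM ger0_norm.
have dom := @dom_gen R R (fun a => `|a|) X I rho rsn n h id
  embM (fun s s0 => ger0_norm s0) Y f e Ysub flin e0.
have {dom} dom : forall y, Y y -> ((`|f y|)%:E <= q y)%E.
  apply: dom => y Yy hk; have := cJ y Yy; rewrite f0 subr0; apply => i Ji.
  by have [k <-] := Jh i Ji; rewrite subr0.
have udom y : Y y -> ((f y)%:E <= q y)%E.
  by move=> Yy; apply: le_trans (dom y Yy); rewrite lee_fin ler_norm.
have [g [glin gext gdom]] := @HB_ext R X q (fun x => qS_ge0 _ _ _ _ _ _ rsn _ _ _ x e0)
  (fun r x => qS_Z _ _ _ _ _ _ rsn _ _ _ r x)
  (fun x y => qS_D _ _ _ _ _ _ rsn _ _ _ x y e0) Y f Ysub flin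
  udom.
exists g; split => //.
apply: (@cont_gen R R (fun a => `|a|) X I rho n h J g e finJ hJ e0 glin).
move=> x; have g0 := lin0 Logic.I glin.
have [gx0|gx0] := leP 0 (g x); first by rewrite ger0_norm.
rewrite ltr0_norm //.
have -> : - g x = g (-1 *: x).
  by have := glin (-1) x 0 Logic.I Logic.I; rewrite addr0 g0 addr0 mulN1r.
apply: le_trans (gdom _) _.
by rewrite /q (qS_Z _ _ _ _ _ _ rsn) normrN normr1 mul1e.
Qed.


Lemma cplx_case (R : realType) (X : lmodType (complex R)) (I : Type)
     (rho : I -> X -> \bar R) :
     (forall i, ext_seminorm (@Normc.normc R) (rho i)) ->
     forall (Y : set X), lin_subspace Y ->
     forall f : X -> complex R, linear_on Y f ->
       cont_on (@Normc.normc R) rho Y f ->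
       exists fh : X -> complex R,
         [/\ linear_on setT fh, cont_on (@Normc.normc R) rho setT fh
           & forall y, Y y -> fh y = f y].
Proof.
move=> rsn Y Ysub f flin fcont.
have [Y0 Ycl] := Ysub.
have f0 := lin0 Y0 flin.
have [J [e [finJ e0 cJ]]] := fcont 0 Y0 1 ltr01.
have [n [h [hJ Jh]]] := enumJ finJ.
pose q x := ((e^-1)%:E * Ssum R _ X I rho n h x)%E.
have embM (s : R) z : 0 <= s -> Normc.normc ((s%:C)%C * z) = s * Normc.normc z.
  by move=> s0; rewrite Normc.normcM normcR.
have dom := @dom_gen R _ (@Normc.normc R) X I rho rsn n h (fun s => (s%:C)%C)
  embM (@normcR R) Y f e Ysub flin e0.
have {dom} dom : forall y, Y y -> ((Normc.normc (f y))%:E <= q y)%E.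
  apply: dom => y Yy hk; have := cJ y Yy; rewrite f0 subr0; apply => i Ji.
  by have [k <-] := Jh i Ji; rewrite subr0.
pose qR : XR R X -> \bar R := q.
have qR_ge0 (x : XR R X) : (0 <= qR x)%E.
  exact: (qS_ge0 _ _ _ _ _ _ rsn _ _ _ x e0).
have qRZ (r : R) (x : XR R X) : qR (r *: x) = (`|r|%:E * qR x)%E.
  by rewrite scRE /qR /q (qS_Z _ _ _ _ _ _ rsn) normcRa.
have qRD (x y : XR R X) : (qR (x + y)%R <= qR x + qR y)%E.
  exact: (@qS_D R _ _ X I rho rsn n h e x y e0).
have YRsub : lin_subspace (Y : set (XR R X)).
  by split => // a x y Yx Yy; rewrite scRE; exact: Ycl.
pose u (x : XR R X) := complex.Re (f x).
have ulin : linear_on (Y : set (XR R X)) u.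
  move=> a x y Yx Yy; rewrite /u scRE flin //.
  by case: (f x) => b1 b2; case: (f y) => c1 c2; rewrite crealE cmulE caddE /=; ring.
have udom y : Y y -> ((u y)%:E <= qR y)%E.
  by move=> Yy; apply: le_trans (dom y Yy); rewrite lee_fin Re_le_normc.
have [g [glin gext gdom]] := @HB_ext R (XR R X) qR qR_ge0 qRZ qRD Y u YRsub ulin udom.
have g0 := lin0 Logic.I glin.
have gD (x y : X) : g (x + y) = g x + g y.
  by have := glin 1 x y Logic.I Logic.I; rewrite scale1r mul1r.
have gZ (r : R) (x : X) : g ((r%:C)%C *: x) = r * g x.
  by have := glin r x 0 Logic.I Logic.I; rewrite !addr0 g0 addr0.
pose fh (x : X) := (g x +i* (- g ('i%C *: x)))%C.
have fhlin : linear_on setT fh.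
  move=> [a1 a2] x y _ _; rewrite /fh.
  have dec : (a1 +i* a2)%C *: x = (a1%:C)%C *: x + (a2%:C)%C *: ('i%C *: x).
    by rewrite scalerA -scalerDl -cdecomp.
  have deci : 'i%C *: ((a1 +i* a2)%C *: x) = ((-a2)%:C)%C *: x + (a1%:C)%C *: ('i%C *: x).
    by rewrite scalerA ci_decomp scalerDl scalerA.
  rewrite scalerDr !gD deci dec !gD !gZ.
  by rewrite cmulE caddE; congr Complex; ring.
exists fh; split => //; last first.
  move=> y Yy; have Yiy : Y ('i%C *: y) by have := Ycl 'i%C y 0 Yy Y0; rewrite addr0.
  rewrite /fh (gext _ Yy) (gext _ Yiy) /u.
  have -> : f ('i%C *: y) = ('i * f y)%C.
    by have := flin 'i%C y 0 Yy Y0; rewrite !addr0 f0 addr0.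
  by case: (f y) => b1 b2; rewrite cmulE /=; congr Complex; ring.
apply: (@cont_gen R _ (@Normc.normc R) X I rho n h J fh e finJ hJ e0 fhlin).
move=> x; have fh0 := lin0 Logic.I fhlin.
case Ez: (fh x) => [a b].
pose w := (a +i* (- b))%C.
have fhw : fh (w *: x) = (w * (a +i* b))%C.
  by have := fhlin w x 0 Logic.I Logic.I; rewrite !addr0 fh0 addr0 Ez.
have := gdom (w *: x).
have -> : g (w *: x) = complex.Re (fh (w *: x)) by [].
rewrite fhw /qR /q (qS_Z _ _ _ _ _ _ rsn) /w normc_conj -/(q x) => H.
apply: E5; [exact: normc_ge0 | exact: (qS_ge0 _ _ _ _ _ _ rsn _ _ _ x e0) |].
by rewrite normc_sq; move: H; rewrite cmulE /=; congr (_ <= _)%E; congr EFin; ring.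
Qed.

Theorem corollary4p2 :
  (* real scalars *)
  (forall (R : realType) (X : lmodType R) (I : Type) (rho : I -> X -> \bar R),
     (forall i, ext_seminorm (fun a : R => `|a|) (rho i)) ->
     forall (Y : set X), lin_subspace Y ->
     forall f : X -> R, linear_on Y f ->
       cont_on (fun a : R => `|a|) rho Y f ->
       exists fh : X -> R,
         [/\ linear_on setT fh, cont_on (fun a : R => `|a|) rho setT fh
           & forall y, Y y -> fh y = f y])
  /\
  (* complex scalars *)
  (forall (R : realType) (X : lmodType (complex R)) (I : Type)
     (rho : I -> X -> \bar R),
     (forall i, ext_seminorm (@Normc.normc R) (rho i)) ->
     forall (Y : set X), lin_subspace Y ->
     forall f : X -> complex R, linear_on Y f ->
       cont_on (@Normc.normc R) rho Y f ->
       exists fh : X -> complex R,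
         [/\ linear_on setT fh, cont_on (@Normc.normc R) rho setT fh
           & forall y, Y y -> fh y = f y]).
Proof.
split; [exact: real_case | exact: cplx_case].
Qed.
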